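(* Let $B=2\pi/\sqrt{6}$, $F(\alpha)=\dfrac{1+e^{-\alpha}}{1+e^{-\alpha}+e^{-2\alpha}}$, and for integers $n,\ell\ge 0$ let $Q_1(n,\ell)=2n(3n+1)+3n\ell$ and $Q_2(n,\ell)=Q_1(n,\ell)+8n+4+2\ell$. Define $$I_M(\ell,N)=\sum_{n\ge 0}\left(e^{-\frac{BQ_1(n,\ell)}{2\sqrt{N}}}-e^{-\frac{BQ_2(n,\ell)}{2\sqrt{N}}}\right).$$ Then, uniformly for integers $0\le\ell\le\sqrt{N}(\log N)^2$, as $N\to\infty$, $$I_M(\ell,N)=\left(1+O\left(N^{-1/10}\right)\right)F\left(\frac{B\ell}{2\sqrt{N}}\right).$$ *)

(* Defs.v *)
From Stdlib Require Import Reals.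
Open Scope R_scope.

Definition B : R := 2 * PI / sqrt 6.

Definition F (a : R) : R :=
  (1 + exp (- a)) / (1 + exp (- a) + exp (- (2 * a))).

Definition Q1 (n l : nat) : R :=
  2 * INR n * (3 * INR n + 1) + 3 * INR n * INR l.
Definition Q2 (n l : nat) : R := Q1 n l + 8 * INR n + 4 + 2 * INR l.

Definition IM_term (l N : nat) (n : nat) : R :=
  exp (- (B * Q1 n l / (2 * sqrt (INR N))))
  - exp (- (B * Q2 n l / (2 * sqrt (INR N)))).

(* Main.v *)
Require Import Defs.
From Stdlib Require Import Reals Lra Lia ClassicalEpsilon.
From Coquelicot Require Import Coquelicot.
Open Scope R_scope.

Lemma lim_close (P A : nat -> R) S L E :
  Un_cv P S -> Un_cv A L -> (forall M, Rabs (P M - A M) <= E) -> Rabs (S - L) <= E.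
Proof.
  intros HP HA HB.
  destruct (Rle_or_lt (Rabs (S - L)) E) as [h|h]; auto.
  set (e := (Rabs (S - L) - E) / 2).
  assert (he : e > 0) by (unfold e; lra).
  destruct (HP e he) as [N1 H1]. destruct (HA e he) as [N2 H2].
  specialize (H1 (max N1 N2) (Nat.le_max_l _ _)).
  specialize (H2 (max N1 N2) (Nat.le_max_r _ _)).
  specialize (HB (max N1 N2)). unfold Rdist in *.
  set (p := P (max N1 N2)) in *. set (a := A (max N1 N2)) in *.
  assert (Rabs (S - L) <= Rabs (p - S) + Rabs (p - a) + Rabs (a - L)).
  { replace (S - L) with (-(p - S) + (p - a) + (a - L)) by ring.
    eapply Rle_trans; [apply Rabs_triang|].
    eapply Rle_trans; [apply Rplus_le_compat_r; apply Rabs_triang|].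
    rewrite Rabs_Ropp; lra. }
  unfold e in *; lra.
Qed.

Lemma sum_lin (a b1 b2 : nat -> R) c1 c2 :
  (forall n, a n = c1 * b1 n + c2 * b2 n) ->
  forall M, sum_f_R0 a M = c1 * sum_f_R0 b1 M + c2 * sum_f_R0 b2 M.
Proof.
  intros H M; induction M; simpl; rewrite H; [ring|rewrite IHM; ring].
Qed.

Lemma sum_le (a b : nat -> R) :
  (forall n, a n <= b n) -> forall M, sum_f_R0 a M <= sum_f_R0 b M.
Proof.
  intros H M; induction M; simpl; [apply H|]. specialize (H (S M)); lra.
Qed.

Lemma sum_abs_le (a b : nat -> R) :
  (forall n, Rabs (a n) <= b n) -> forall M, Rabs (sum_f_R0 a M) <= sum_f_R0 b M.
Proof.
  intros H M; induction M; simpl; [apply H|].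
  eapply Rle_trans; [apply Rabs_triang|]. specialize (H (S M)); lra.
Qed.

Lemma alt_inc (h : R -> R) (xi eta : nat -> R) :
  (forall n, h (xi n) <= h (eta n)) -> (forall n, h (eta n) <= h (xi (S n))) ->
  forall M, 0 <= sum_f_R0 (fun n => h (eta n) - h (xi n)) M <= h (eta M) - h (xi 0%nat).
Proof.
  intros H1 H2 M; induction M; simpl.
  - specialize (H1 0%nat); lra.
  - specialize (H1 (S M)); specialize (H2 M); lra.
Qed.

Lemma exp_n c n : exp (c * INR n) = exp c ^ n.
Proof.
  induction n. simpl. rewrite Rmult_0_r, exp_0; ring.
  rewrite S_INR, Rmult_plus_distr_l, exp_plus, IHn, Rmult_1_r; simpl; ring.
Qed.

Definition psi t b x := exp (-(6*t*x^2 + b*x)).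
Definition g t b x := (12*t*x + b) * exp (-(6*t*x^2 + b*x)).

Lemma psi_der t b x : derivable_pt_lim (psi t b) x (- g t b x).
Proof.
  apply is_derive_Reals. unfold psi, g. auto_derive. auto. simpl. ring.
Qed.

Lemma mvt_psi t b x d : 0 < d -> exists c, x < c < x + d /\
   psi t b x - psi t b (x + d) = d * g t b c.
Proof.
  intros hd. destruct (MVT_cor2 (psi t b) (fun y => - g t b y) x (x+d)) as [c [h1 h2]].
  lra. intros; apply psi_der.
  exists c; split; [lra|]. replace (x + d - x) with d in h1 by ring. lra.
Qed.

Lemma g_nonneg t b x : 0 <= t -> 0 <= b -> 0 <= x -> 0 <= g t b x.
Proof.
  intros; unfold g. apply Rmult_le_pos; [nra| left; apply exp_pos].
Qed.

Lemma exp_split t b x y : exp (-(6*t*y^2+b*y)) =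
   exp (-(6*t*x^2+b*x)) * exp (-((y - x) * (6*t*(x+y) + b))).
Proof. rewrite <- exp_plus; f_equal; ring. Qed.

Lemma g_inc t b x y : 0 < t -> 0 < b -> 0 <= x <= y ->
  (12*t*y+b)^2 <= 12*t -> g t b x <= g t b y.
Proof.
  intros ht hb hxy hv. unfold g. rewrite (exp_split t b x y).
  set (E := exp (-(6*t*x^2+b*x))). assert (hE : 0 < E) by apply exp_pos.
  set (d := (y - x) * (6 * t * (x + y) + b)).
  pose proof (exp_ineq1_le (-d)) as he.
  set (v := 12*t*y+b) in *. set (w := 6*t*(x+y)+b).
  assert (w <= v) by (unfold w, v; nra). assert (0 < w) by (unfold w; nra).
  assert (v * w <= 12 * t) by nra.
  assert (12*t*x+b <= v*(1 - d)).
  { unfold d. fold w. replace (12*t*x+b) with (v - 12*t*(y-x)) by (unfold v; ring). nra. }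
  assert (0 <= v) by nra.
  apply Rle_trans with (v*(1-d)*E). nra.
  assert (0 <= v*E) by nra. nra.
Qed.

Lemma g_dec t b x y : 0 < t -> 0 < b -> 0 <= x <= y ->
  12*t <= (12*t*x+b)^2 -> g t b y <= g t b x.
Proof.
  intros ht hb hxy hv. unfold g. rewrite (exp_split t b x y).
  set (E := exp (-(6*t*x^2+b*x))). assert (hE : 0 < E) by apply exp_pos.
  set (d := (y - x) * (6 * t * (x + y) + b)).
  assert (hd0 : 0 <= d) by (unfold d; apply Rmult_le_pos; nra).
  pose proof (exp_ineq1_le d) as he.
  assert (hed : exp (-d) * exp d = 1) by (rewrite <- exp_plus; replace (-d+d) with 0 by ring; apply exp_0).
  set (u := 12*t*x+b) in *. set (w := 6*t*(x+y)+b).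
  assert (u <= w) by (unfold w, u; nra). assert (0 < u) by (unfold u; nra).
  assert (12 * t <= u * w) by nra.
  assert (12*t*y+b <= u*(1 + d)).
  { unfold d. fold w. replace (12*t*y+b) with (u + 12*t*(y-x)) by (unfold u; ring). nra. }
  assert (0 < exp (-d)) by apply exp_pos.
  assert (12*t*y+b <= u * exp d) by nra.
  apply Rle_trans with (u * exp d * exp (-d) * E).
  - assert (0 <= exp (-d) * E) by nra. nra.
  - replace (u * exp d * exp (-d) * E) with (u * E * (exp (-d) * exp d)) by ring.
    rewrite hed; lra.
Qed.
Lemma exp_mono x y : x <= y -> exp x <= exp y.
Proof.
  intros [h|h]; [left; apply exp_increasing; auto | subst; lra].
Qed.

Definition x0 t b := Rmax 0 ((sqrt (12*t) - b) / (12*t)).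

Lemma x0_nonneg t b : 0 <= x0 t b.
Proof. apply Rmax_l. Qed.

Lemma inc_region t b x y : 0 < t -> 0 < b -> 0 <= x <= y -> y <= x0 t b ->
  g t b x <= g t b y.
Proof.
  intros ht hb hxy hy. unfold x0, Rmax in hy.
  destruct (Rle_dec 0 ((sqrt (12 * t) - b) / (12 * t))) as [h|h].
  - apply g_inc; auto.
    assert (12*t*y <= sqrt (12*t) - b).
    { apply Rle_trans with (12*t*((sqrt (12*t)-b)/(12*t))).
      apply Rmult_le_compat_l; lra. right; field; lra. }
    pose proof (sqrt_sqrt (12*t)) as hs. pose proof (sqrt_pos (12*t)).
    assert (0 <= 12*t*y) by nra. nra.
  - assert (x = y) by lra. subst; lra.
Qed.

Lemma dec_region t b x y : 0 < t -> 0 < b -> x0 t b <= x <= y ->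
  g t b y <= g t b x.
Proof.
  intros ht hb hxy. pose proof (x0_nonneg t b).
  assert (h1 : (sqrt (12*t) - b)/(12*t) <= x) by (pose proof (Rmax_r 0 ((sqrt (12*t) - b)/(12*t))); unfold x0 in *; lra).
  apply g_dec; auto. lra.
  assert (sqrt (12*t) - b <= 12*t*x).
  { apply Rle_trans with (12*t*((sqrt (12*t)-b)/(12*t))).
    right; field; lra. apply Rmult_le_compat_l; lra. }
  pose proof (sqrt_sqrt (12*t)) as hs. pose proof (sqrt_pos (12*t)).
  nra.
Qed.

Lemma g_bound t b x : 0 < t -> 0 < b -> 0 <= x -> g t b x <= b + sqrt (6*t).
Proof.
  intros ht hb hx. unfold g.
  set (s := sqrt (6*t)). assert (hs : s*s = 6*t) by (apply sqrt_sqrt; lra).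
  assert (hs0 : 0 <= s) by apply sqrt_pos.
  assert (h1 : exp (-(6*t*x^2+b*x)) <= exp (-(6*t*x^2))) by (apply exp_mono; nra).
  assert (h2 : exp (-(6*t*x^2)) <= 1) by (rewrite <- exp_0; apply exp_mono; nra).
  pose proof (exp_ineq1_le (6*t*x^2)) as h3.
  assert (h4 : exp (6*t*x^2) * exp (-(6*t*x^2)) = 1) by (rewrite <- exp_plus; replace (6*t*x^2 + - (6*t*x^2)) with 0 by ring; apply exp_0).
  assert (h5 : 12*t*x <= s*(1+6*t*x^2)).
  { replace (12*t*x) with (2*(s*s)*x) by (rewrite hs; ring). replace (6*t*x^2) with (s*s*x^2) by (rewrite <- hs; ring).
    assert (0 <= s*(1 - s*x)^2) by (apply Rmult_le_pos; [lra| apply pow2_ge_0]).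
    replace (s*(1+s*s*x^2)) with (s*(1-s*x)^2 + 2*(s*s)*x) by ring. lra. }
  assert (h6 : 12*t*x*exp (-(6*t*x^2)) <= s).
  { pose proof (exp_pos (-(6*t*x^2))). 
    apply Rle_trans with (s*(1+6*t*x^2)*exp (-(6*t*x^2))). nra.
    apply Rle_trans with (s*exp (6*t*x^2)*exp (-(6*t*x^2))).
    apply Rmult_le_compat_r; [lra|]. apply Rmult_le_compat_l; lra. nra. }
  pose proof (exp_pos (-(6*t*x^2+b*x))).
  assert (0 <= 12*t*x) by nra.
  nra.
Qed.
Lemma two3 : 0 < 2/3. Proof. lra. Qed.
Lemma one3 : 0 < 1/3. Proof. lra. Qed.

Definition xi t b n := proj1_sig (constructive_indefinite_description _ (mvt_psi t b (INR n) (2/3) two3)).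
Definition eta t b n := proj1_sig (constructive_indefinite_description _ (mvt_psi t b (INR n + 2/3) (1/3) one3)).

Lemma xi_spec t b n : INR n < xi t b n < INR n + 2/3 /\
  psi t b (INR n) - psi t b (INR n + 2/3) = 2/3 * g t b (xi t b n).
Proof. unfold xi. destruct (constructive_indefinite_description _ _) as [c hc]; simpl. exact hc. Qed.

Lemma eta_spec t b n : INR n + 2/3 < eta t b n < INR n + 2/3 + 1/3 /\
  psi t b (INR n + 2/3) - psi t b (INR n + 2/3 + 1/3) = 1/3 * g t b (eta t b n).
Proof. unfold eta. destruct (constructive_indefinite_description _ _) as [c hc]; simpl. exact hc. Qed.

Lemma tele (f : nat -> R) M : sum_f_R0 (fun n => f n - f (S n)) M = f 0%nat - f (S M).
Proof. induction M; simpl; [ring| rewrite IHM; ring]. Qed.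

Definition gi t b x := g t b (Rmin x (x0 t b)).
Definition gd t b x := g t b (Rmax x (x0 t b)).

Lemma g_split t b x : g t b x = gi t b x + gd t b x - g t b (x0 t b).
Proof.
  unfold gi, gd, Rmin, Rmax. destruct (Rle_dec x (x0 t b)); destruct (Rle_dec x (x0 t b)); try ring; lra.
Qed.

Lemma gi_mono t b x y : 0 < t -> 0 < b -> 0 <= x <= y -> gi t b x <= gi t b y.
Proof.
  intros; unfold gi. pose proof (x0_nonneg t b). apply inc_region; auto.
  split. apply Rmin_glb; lra. apply Rle_min_compat_r; lra. apply Rmin_r.
Qed.

Lemma gi_bnd t b x : 0 < t -> 0 < b -> 0 <= x -> 0 <= gi t b x <= g t b (x0 t b).
Proof.
  intros; unfold gi. pose proof (x0_nonneg t b).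
  assert (0 <= Rmin x (x0 t b)) by (apply Rmin_glb; lra).
  split. apply g_nonneg; lra. apply inc_region; auto. split; [lra|apply Rmin_r]. lra.
Qed.

Lemma gd_anti t b x y : 0 < t -> 0 < b -> 0 <= x <= y -> gd t b y <= gd t b x.
Proof.
  intros; unfold gd. apply dec_region; auto.
  split. apply Rmax_r. apply Rle_max_compat_r; lra.
Qed.

Lemma gd_bnd t b x : 0 < t -> 0 < b -> 0 <= x -> 0 <= gd t b x <= g t b (x0 t b).
Proof.
  intros; unfold gd. pose proof (x0_nonneg t b).
  assert (x0 t b <= Rmax x (x0 t b)) by apply Rmax_r.
  split. apply g_nonneg; lra. apply dec_region; auto. lra.
Qed.

Lemma small_partial t b M : 0 < t -> 0 < b ->
  Rabs (sum_f_R0 (fun n => psi t b (INR n) - psi t b (INR n + 2/3)) M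
        - 2/3 * (1 - psi t b (INR (S M)))) <= 2/9 * (b + sqrt (6*t)).
Proof.
  intros ht hb.
  set (X := sum_f_R0 (fun n => g t b (xi t b n)) M).
  set (Y := sum_f_R0 (fun n => g t b (eta t b n)) M).
  assert (HP : sum_f_R0 (fun n => psi t b (INR n) - psi t b (INR n + 2/3)) M = 2/3 * X + 0 * X).
  { apply sum_lin. intros n; destruct (xi_spec t b n) as [_ h]; rewrite h; ring. }
  assert (HT : sum_f_R0 (fun n => psi t b (INR n) - psi t b (INR (S n))) M = 2/3 * X + 1/3 * Y).
  { apply sum_lin. intros n; destruct (xi_spec t b n) as [_ h]; destruct (eta_spec t b n) as [_ h'].
    rewrite S_INR. replace (INR n + 1) with (INR n + 2/3 + 1/3) by field. lra. }
  rewrite (tele (fun n => psi t b (INR n))) in HT.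
  assert (hp0 : psi t b (INR 0) = 1) by (unfold psi; simpl; rewrite <- exp_0; f_equal; ring).
  rewrite hp0 in HT.
  set (G0 := g t b (x0 t b)).
  assert (HG : G0 <= b + sqrt (6*t)) by (apply g_bound; auto; apply x0_nonneg).
  assert (o1 : forall n, 0 <= xi t b n <= eta t b n).
  { intros n; destruct (xi_spec t b n) as [h _]; destruct (eta_spec t b n) as [h' _]; pose proof (pos_INR n); lra. }
  assert (o2 : forall n, 0 <= eta t b n <= xi t b (S n)).
  { intros n; destruct (xi_spec t b (S n)) as [h _]; destruct (eta_spec t b n) as [h' _]; pose proof (pos_INR n).
    rewrite S_INR in h; lra. }
  set (A := sum_f_R0 (fun n => gi t b (eta t b n) - gi t b (xi t b n)) M).
  set (h := fun x => - gd t b x).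
  set (Bs := sum_f_R0 (fun n => h (eta t b n) - h (xi t b n)) M).
  assert (HXY : X - Y = -1 * A + 1 * Bs).
  { replace (X - Y) with (1 * X + (-1) * Y) by ring. unfold X, Y, A, Bs.
    rewrite <- (sum_lin (fun n => g t b (xi t b n) - g t b (eta t b n))).
    rewrite <- (sum_lin (fun n => g t b (xi t b n) - g t b (eta t b n))). reflexivity.
    intros n; unfold h; rewrite (g_split t b (xi t b n)), (g_split t b (eta t b n)); ring.
    intros n; ring. }
  assert (HA : 0 <= A <= G0).
  { destruct (alt_inc (gi t b) (xi t b) (eta t b)) with (M := M) as [a1 a2].
    intros n; apply gi_mono; auto; apply o1.
    intros n; apply gi_mono; auto; apply o2.
    pose proof (gi_bnd t b (eta t b M) ht hb (proj1 (o2 M))).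
    pose proof (gi_bnd t b (xi t b 0) ht hb (proj1 (o1 0%nat))).
    unfold A, G0; lra. }
  assert (HB : 0 <= Bs <= G0).
  { destruct (alt_inc h (xi t b) (eta t b)) with (M := M) as [a1 a2].
    intros n; unfold h; pose proof (gd_anti t b _ _ ht hb (o1 n)); lra.
    intros n; unfold h; pose proof (gd_anti t b _ _ ht hb (o2 n)); lra.
    pose proof (gd_bnd t b (eta t b M) ht hb (proj1 (o2 M))).
    pose proof (gd_bnd t b (xi t b 0) ht hb (proj1 (o1 0%nat))).
    unfold Bs, G0; unfold h in *; lra. }
  rewrite HP. replace (2 / 3 * X + 0 * X - 2 / 3 * (1 - psi t b (INR (S M)))) with (2/9 * (X - Y)) by lra.
  rewrite HXY, Rabs_mult, Rabs_pos_eq by lra.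
  apply Rmult_le_compat_l; [lra|]. apply Rabs_le; lra.
Qed.
Lemma large_term t a n : 0 < t -> 0 <= a ->
  Rabs ((psi t (2*t+3*a) (INR n) - psi t (2*t+3*a) (INR n + 2/3))
        - (exp (-(3*a) * INR n) - exp (-(3*a) * (INR n + 2/3))))
  <= t * (6 * INR n ^ 2 + 10 * INR n + 4) * exp (-(3*a) * INR n).
Proof.
  intros ht ha. set (x := INR n). assert (hx : 0 <= x) by apply pos_INR.
  set (E := exp (-(3*a) * x)). set (r := exp (-(2*a))).
  set (p1 := exp (-(6*t*x^2 + 2*t*x))).
  set (p2 := exp (-(6*t*(x+2/3)^2 + 2*t*(x+2/3)))).
  assert (e1 : psi t (2*t+3*a) x = p1 * E) by (unfold psi, p1, E; rewrite <- exp_plus; f_equal; ring).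
  assert (e2 : psi t (2*t+3*a) (x+2/3) = p2 * E * r) by (unfold psi, p2, E, r; rewrite <- !exp_plus; f_equal; field).
  assert (e3 : exp (-(3*a) * (x+2/3)) = E * r) by (unfold E, r; rewrite <- exp_plus; f_equal; field).
  rewrite e1, e2, e3.
  assert (hE : 0 < E) by apply exp_pos.
  assert (hr0 : 0 < r) by apply exp_pos.
  assert (hr1 : r <= 1) by (unfold r; rewrite <- exp_0; apply exp_mono; lra).
  assert (hp1 : p1 <= 1) by (unfold p1; rewrite <- exp_0; apply exp_mono; nra).
  assert (hp21 : p2 <= p1) by (unfold p1, p2; apply exp_mono; nra).
  assert (hp2 : 0 < p2) by apply exp_pos.
  assert (hz : 1 - p2 <= t * (6 * x^2 + 10 * x + 4)).
  { pose proof (exp_ineq1_le (-(6*t*(x+2/3)^2 + 2*t*(x+2/3)))). fold p2 in H. nra. }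
  replace (p1 * E - p2 * E * r - (E - E * r)) with (E * ((p1 - 1) + r * (1 - p2))) by ring.
  rewrite Rabs_mult, (Rabs_pos_eq E) by lra.
  replace (t * (6 * x ^ 2 + 10 * x + 4) * E) with (E * (t * (6 * x ^ 2 + 10 * x + 4))) by ring.
  apply Rmult_le_compat_l; [lra|]. apply Rabs_le; split; nra.
Qed.

Lemma large_pt a x : 0 < a -> 0 <= x ->
  (6*x^2 + 10*x + 4) * exp (-(3*a) * x) <= (6/a^2 + 10/a + 4) * exp (-a * x).
Proof.
  intros ha hx. set (X := exp (-a * x)).
  assert (e : exp (-(3*a)*x) = X*X*X) by (unfold X; rewrite <- !exp_plus; f_equal; ring).
  rewrite e.
  assert (hX : 0 < X) by apply exp_pos.
  assert (hX1 : X <= 1) by (unfold X; rewrite <- exp_0; apply exp_mono; nra).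
  assert (hinv : exp (a*x) * X = 1) by (unfold X; rewrite <- exp_plus; replace (a*x + - a*x) with 0 by ring; apply exp_0).
  pose proof (exp_ineq1_le (a*x)).
  set (ia := / a). assert (hia : a * ia = 1) by (unfold ia; field; lra). assert (0 < ia) by (unfold ia; apply Rinv_0_lt_compat; auto).
  set (u := x * X). assert (hu0 : 0 <= u) by (unfold u; nra).
  assert (hu : u <= ia).
  { assert (a * u <= 1) by (unfold u; nra).
    apply Rmult_le_reg_l with a; auto. lra. }
  replace (6 / a ^ 2 + 10 / a + 4) with (6*ia^2 + 10*ia + 4) by (unfold ia; field; lra).
  replace ((6 * x ^ 2 + 10 * x + 4) * (X * X * X)) with (6*u^2*X + 10*u*X*X + 4*X*X*X) by (unfold u; ring).
  assert (u^2 <= ia^2) by nra.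
  assert (u*X*X <= ia * X) by (assert (X*X <= X) by nra; nra).
  assert (X*X*X <= X) by nra.
  nra.
Qed.

Lemma geo_bound a M : 0 < a -> sum_f_R0 (fun n => exp (-a * INR n)) M <= (1 + a) / a.
Proof.
  intros ha. set (k := exp (-a)).
  assert (hk : sum_f_R0 (fun n => exp (-a * INR n)) M = sum_f_R0 (fun n => k ^ n) M).
  { rewrite (sum_lin _ (fun n => k ^ n) (fun n => k^n) 1 0). ring. intros n; unfold k; rewrite exp_n; ring. }
  rewrite hk.
  assert (hk0 : 0 < k) by apply exp_pos.
  assert (hinv : exp a * k = 1) by (unfold k; rewrite <- exp_plus; replace (a + - a) with 0 by ring; apply exp_0).
  pose proof (exp_ineq1_le a).
  assert (hk1 : k < 1) by nra.
  rewrite tech3 by lra.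
  pose proof (pow_le k (S M) (Rlt_le _ _ hk0)).
  apply Rle_trans with (1 / (1 - k)).
  - unfold Rdiv. apply Rmult_le_compat_r. left; apply Rinv_0_lt_compat; lra. lra.
  - assert ((1 + a) * k <= 1) by nra.
    assert (Hq1 : 0 <= ((1+a)*(1-k) - a) / (a*(1-k))) by (apply Rdiv_le_0_compat; nra).
    assert (Hq2 : 1/(1-k) = (1+a)/a - ((1+a)*(1-k) - a)/(a*(1-k))) by (field; split; lra).
    lra.
Qed.

Lemma F_geo a : 0 < a ->
  Un_cv (fun M => sum_f_R0 (fun n => exp (-(3*a) * INR n) - exp (-(3*a) * (INR n + 2/3))) M) (F a).
Proof.
  intros ha. set (x := exp (-a)).
  assert (hx0 : 0 < x) by apply exp_pos.
  assert (hinv : exp a * x = 1) by (unfold x; rewrite <- exp_plus; replace (a + - a) with 0 by ring; apply exp_0).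
  pose proof (exp_ineq1_le a).
  assert (hx1 : x < 1) by nra.
  set (q := x^3). set (r := x^2).
  assert (hq : exp (-(3*a)) = q) by (unfold q, x; rewrite <- exp_n; f_equal; simpl; ring).
  assert (hr : exp (-(2*a)) = r) by (unfold r, x; rewrite <- exp_n; f_equal; simpl; ring).
  assert (hq1 : q < 1) by (unfold q; simpl; nra). assert (hq0 : 0 < q) by (unfold q; simpl; nra).
  assert (HS : forall M, sum_f_R0 (fun n => exp (-(3*a) * INR n) - exp (-(3*a) * (INR n + 2/3))) M
              = (1 - r) / (1 - q) - (1 - r) / (1 - q) * q ^ (S M)).
  { intros M. rewrite (sum_lin _ (fun n => q^n) (fun n => q^n) (1 - r) 0).
    rewrite tech3 by lra. field; lra.
    intros n. rewrite <- hq, <- hr, <- exp_n. replace (-(3*a) * (INR n + 2/3)) with (-(3*a)*INR n + -(2*a)) by field.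
    rewrite exp_plus. ring. }
  assert (HF : F a = (1 - r) / (1 - q)).
  { unfold F. fold x. rewrite hr. unfold r, q. field. split; nra. }
  rewrite HF. set (C := (1 - r) / (1 - q)).
  assert (hC : 0 < C) by (unfold C, r; apply Rdiv_lt_0_compat; simpl; nra).
  intros eps heps.
  destruct (pow_lt_1_zero q) with (y := eps / C) as [N HN].
  rewrite Rabs_pos_eq; lra. apply Rdiv_lt_0_compat; lra.
  exists N. intros n hn. unfold Rdist. rewrite HS. fold C.
  replace (C - C * q ^ S n - C) with (- (C * q ^ S n)) by ring.
  rewrite Rabs_Ropp, Rabs_mult, (Rabs_pos_eq C) by lra.
  specialize (HN (S n) ltac:(lia)).
  apply Rmult_lt_compat_l with (r := C) in HN; auto.
  replace (C * (eps / C)) with eps in HN by (field; lra). lra.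
Qed.
Lemma sum_ext (a b : nat -> R) : (forall n, a n = b n) -> forall M, sum_f_R0 a M = sum_f_R0 b M.
Proof. intros H M. rewrite (sum_lin a b b 1 0). ring. intros; rewrite H; ring. Qed.

Lemma A_cv t b : 0 < t -> 0 < b -> Un_cv (fun M => 2/3 * (1 - psi t b (INR (S M)))) (2/3).
Proof.
  intros ht hb eps heps.
  destruct (archimed_cor1 (b * eps)) as [N [hN hN0]]. nra.
  exists N. intros M hM. unfold Rdist.
  set (x := INR (S M)).
  assert (hxN : INR N <= x) by (unfold x; apply le_INR; lia).
  assert (hN1 : 0 < INR N) by (apply lt_0_INR; lia).
  assert (hx : 0 < x) by lra.
  assert (hp : psi t b x * exp (6*t*x^2 + b*x) = 1) by (unfold psi; rewrite <- exp_plus; replace (-(6*t*x^2+b*x) + (6*t*x^2+b*x)) with 0 by ring; apply exp_0).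
  pose proof (exp_ineq1_le (6*t*x^2 + b*x)).
  assert (hp0 : 0 < psi t b x) by (unfold psi; apply exp_pos).
  assert (hq1 : (1 + (6*t*x^2 + b*x)) * psi t b x <= exp (6*t*x^2 + b*x) * psi t b x) by (apply Rmult_le_compat_r; lra).
  assert (hq2 : 0 <= 6*t*x^2 * psi t b x) by (apply Rmult_le_pos; [apply Rmult_le_pos; [lra|apply pow2_ge_0]|lra]).
  assert (hbx : b * x * psi t b x <= 1) by nra.
  assert (hinv : INR N * / INR N = 1) by (field; lra).
  assert (psi t b x < eps).
  { assert (b * INR N * psi t b x <= 1) by nra.
    assert (b * psi t b x <= / INR N).
    { replace (b * psi t b x) with ((b * INR N * psi t b x) * / INR N) by (field; lra).
      rewrite <- (Rmult_1_l (/ INR N)) at 2.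
      apply Rmult_le_compat_r; [left; apply Rinv_0_lt_compat; lra| lra]. }
    apply Rmult_lt_reg_l with b; lra. }
  replace (2 / 3 * (1 - psi t b x) - 2 / 3) with (- (2/3 * psi t b x)) by ring.
  rewrite Rabs_Ropp, Rabs_pos_eq by lra. lra.
Qed.

Lemma F_near a : 0 <= a -> 0 <= F a - 2/3 <= a.
Proof.
  intros ha. set (x := exp (-a)).
  assert (hx0 : 0 < x) by apply exp_pos.
  assert (hx1 : x <= 1) by (unfold x; rewrite <- exp_0; apply exp_mono; lra).
  assert (hxa : 1 - a <= x) by (unfold x; pose proof (exp_ineq1_le (-a)); lra).
  assert (e2 : exp (-(2*a)) = x * x) by (unfold x; rewrite <- exp_plus; f_equal; ring).
  unfold F. fold x. rewrite e2.
  set (K := (1 + 2*x) / (3 * (1 + x + x*x))).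
  assert (hK : K * (3 * (1 + x + x*x)) = 1 + 2*x) by (unfold K; field; nra).
  assert (hK0 : 0 <= K) by (unfold K; apply Rdiv_le_0_compat; nra).
  assert (hK1 : K <= 1) by nra.
  replace ((1 + x) / (1 + x + x * x) - 2 / 3) with ((1 - x) * K) by (unfold K; field; nra).
  split; nra.
Qed.

Lemma core t L (u : nat -> R) : 0 < t <= 1 -> 0 <= L ->
  (forall n, u n = psi t (2*t + 3*(t*L)) (INR n) - psi t (2*t + 3*(t*L)) (INR n + 2/3)) ->
  exists S, infinite_sum u S /\ Rabs (S - F (t*L)) <= 40 * sqrt (sqrt t).
Proof.
  intros [ht ht1] hL hu.
  set (a := t * L). set (b := 2*t + 3*a).
  assert (ha : 0 <= a) by (unfold a; nra). assert (hb : 0 < b) by (unfold b; lra).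
  set (tau := sqrt (sqrt t)).
  assert (hst : sqrt t * sqrt t = t) by (apply sqrt_sqrt; lra).
  assert (hst0 : 0 < sqrt t) by (apply sqrt_lt_R0; lra).
  assert (htt : tau * tau = sqrt t) by (apply sqrt_sqrt; lra).
  assert (htau : 0 < tau) by (apply sqrt_lt_R0; lra).
  assert (hst1 : sqrt t <= 1) by (rewrite <- sqrt_1; apply sqrt_le_1_alt; lra).
  assert (htau1 : tau <= 1) by (unfold tau; rewrite <- sqrt_1; apply sqrt_le_1_alt; lra).
  assert (ht4 : t = tau*tau*(tau*tau)) by (rewrite htt; lra).
  assert (htle : t <= tau) by (rewrite ht4; assert (tau*tau <= 1) by nra; nra).
  set (P := fun M => sum_f_R0 u M).
  assert (HPe : forall M, P M = sum_f_R0 (fun n => psi t b (INR n) - psi t b (INR n + 2/3)) M)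
    by (intros M; apply sum_ext; intros n; rewrite hu; reflexivity).
  assert (hu0 : forall n, 0 <= u n).
  { intros n; rewrite hu. fold a b. unfold psi. pose proof (pos_INR n).
    assert (exp (-(6*t*(INR n + 2/3)^2 + b*(INR n + 2/3))) <= exp (-(6*t*INR n^2 + b*INR n))) by (apply exp_mono; nra).
    lra. }
  assert (Hsp : forall M, Rabs (P M - 2/3 * (1 - psi t b (INR (S M)))) <= 2/9 * (b + sqrt (6*t)))
    by (intros M; rewrite HPe; apply small_partial; auto).
  destruct (growing_cv P) as [S HS].
  { intros n; unfold P; simpl; pose proof (hu0 (S n)); lra. }
  { exists (2/3 + 2/9 * (b + sqrt (6*t))). intros x [i ->].
    specialize (Hsp i). apply Rabs_le_between in Hsp.
    assert (0 <= psi t b (INR (S i))) by (unfold psi; left; apply exp_pos). lra. }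
  exists S; split; [exact HS|].
  destruct (Rle_or_lt tau a) as [hlarge|hsmall].
  -
    assert (ha0 : 0 < a) by lra.
    set (K := t * (6/a^2 + 10/a + 4) * ((1 + a)/a)).
    assert (HK : K <= 40 * tau).
    { set (ia := / a). set (w := / tau).
      assert (hw : tau * w = 1) by (unfold w; field; lra).
      assert (hia : a * ia = 1) by (unfold ia; field; lra).
      assert (hia0 : 0 < ia) by (unfold ia; apply Rinv_0_lt_compat; lra).
      assert (hiaw : ia <= w) by (unfold ia, w; apply Rinv_le_contravar; lra).
      assert (hw1 : 1 <= w) by nra.
      assert (eK : K = t * (6*ia^2 + 10*ia + 4) * (1 + ia)) by (unfold K, ia; field; lra).
      assert (h1 : (6*ia^2 + 10*ia + 4) * (1 + ia) <= 40 * (w*w*w)).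
      { assert (6*ia^2 + 10*ia + 4 <= 20*(w*w)) by nra.
        assert (1 + ia <= 2 * w) by lra.
        assert (0 <= 6*ia^2 + 10*ia + 4) by nra. nra. }
      rewrite eK. replace (40 * tau) with (t * (40 * (w*w*w))).
      rewrite Rmult_assoc. apply Rmult_le_compat_l; lra.
      rewrite ht4. replace (tau * tau * (tau * tau) * (40 * (w * w * w))) with (40 * tau * ((tau*w)*(tau*w)*(tau*w))) by ring.
      rewrite hw; ring. }
    assert (Hb : forall M, Rabs (P M - sum_f_R0 (fun n => exp (-(3*a) * INR n) - exp (-(3*a) * (INR n + 2/3))) M) <= K).
    { intros M. rewrite HPe.
      replace (sum_f_R0 (fun n => psi t b (INR n) - psi t b (INR n + 2/3)) M - sum_f_R0 (fun n => exp (-(3*a) * INR n) - exp (-(3*a) * (INR n + 2/3))) M)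
        with (sum_f_R0 (fun n => (psi t b (INR n) - psi t b (INR n + 2/3)) - (exp (-(3*a) * INR n) - exp (-(3*a) * (INR n + 2/3)))) M)
        by (rewrite (sum_lin _ (fun n => psi t b (INR n) - psi t b (INR n + 2/3)) (fun n => exp (-(3*a) * INR n) - exp (-(3*a) * (INR n + 2/3))) 1 (-1)); [ring| intros; ring]).
      apply Rle_trans with (sum_f_R0 (fun n => t * (6 * INR n ^ 2 + 10 * INR n + 4) * exp (-(3*a) * INR n)) M).
      apply sum_abs_le. intros n. unfold b. apply large_term; auto.
      apply Rle_trans with (sum_f_R0 (fun n => t * (6/a^2 + 10/a + 4) * exp (-a * INR n)) M).
      apply sum_le. intros n. rewrite Rmult_assoc, Rmult_assoc. apply Rmult_le_compat_l; [lra|].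
      apply large_pt; auto; apply pos_INR.
      rewrite (sum_lin _ (fun n => exp (-a * INR n)) (fun n => exp (-a * INR n)) (t * (6/a^2 + 10/a + 4)) 0) by (intros; ring).
      rewrite Rmult_0_l, Rplus_0_r. unfold K. apply Rmult_le_compat_l.
      assert (0 < / a) by (apply Rinv_0_lt_compat; lra).
      replace (6/a^2 + 10/a + 4) with (6 * (/a)^2 + 10 * /a + 4) by (field; lra). nra.
      apply geo_bound; auto. }
    pose proof (lim_close P _ S (F a) K HS (F_geo a ha0) Hb). lra.
  -
    pose proof (lim_close P _ S (2/3) _ HS (A_cv t b ht hb) Hsp) as H1.
    pose proof (F_near a ha) as H2.
    assert (hs6 : sqrt (6*t) <= 3 * tau).
    { rewrite <- (sqrt_square (3*tau)) by lra. apply sqrt_le_1_alt. rewrite ht4.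
      assert (tau*tau <= 1) by nra. nra. }
    assert (2/9 * (b + sqrt (6*t)) + a <= 40 * tau) by (unfold b; lra).
    apply Rabs_le_between in H1. apply Rabs_le_between. lra.
Qed.
Lemma B_bounds : 0 < B <= 4.
Proof.
  unfold B. pose proof PI_RGT_0. pose proof PI_4.
  assert (h6 : 2 <= sqrt 6).
  { rewrite <- (sqrt_square 2) by lra. apply sqrt_le_1_alt; lra. }
  split. apply Rdiv_lt_0_compat; lra.
  apply Rle_trans with (2*PI/2). unfold Rdiv. apply Rmult_le_compat_l; [lra|].
  apply Rinv_le_contravar; lra. lra.
Qed.

Lemma pow4_le x y : 0 <= x -> 0 <= y -> x*x*(x*x) <= y*y*(y*y) -> x <= y.
Proof.
  intros hx hy h. destruct (Rle_or_lt x y) as [|h']; auto.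
  assert (y*y <= x*x) by nra. assert (y*y < x*x) by nra.
  assert (0 <= y*y) by nra. nra.
Qed.

Theorem mainTheorem8 :
  exists C N0 : R, 0 < C /\
    forall N l : nat, N0 <= INR N ->
      INR l <= sqrt (INR N) * (ln (INR N)) ^ 2 ->
      exists S : R,
        infinite_sum (IM_term l N) S /\
        Rabs (S - F (B * INR l / (2 * sqrt (INR N))))
          <= C * Rpower (INR N) (- (1 / 10)) * F (B * INR l / (2 * sqrt (INR N))).
Proof.
  exists 120, 4. split; [lra|]. intros N l hN _.
  set (x := INR N) in *. set (sN := sqrt x) in *.
  assert (hsN : 2 <= sN) by (unfold sN; rewrite <- (sqrt_square 2) by lra; apply sqrt_le_1_alt; lra).
  assert (hss : sN * sN = x) by (apply sqrt_sqrt; lra).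
  destruct B_bounds as [hB0 hB4].
  set (t := B / (2 * sN)).
  assert (ht0 : 0 < t) by (unfold t; apply Rdiv_lt_0_compat; lra).
  assert (ht1 : t <= 1).
  { unfold t. apply Rle_trans with (B / 4). unfold Rdiv. apply Rmult_le_compat_l; [lra|].
    apply Rinv_le_contravar; lra. lra. }
  set (L := INR l). assert (hL : 0 <= L) by apply pos_INR.
  destruct (core t L (IM_term l N)) as [S [HS HB]]; auto.
  { intros n. unfold IM_term, Q1, Q2, psi. fold x sN. fold L.
    unfold Q2, Q1. f_equal; f_equal; unfold t, L; field; lra. }
  exists S. split; auto.
  replace (B * L / (2 * sN)) with (t * L) by (unfold t; field; lra).
  pose proof (F_near (t*L) ltac:(nra)) as HF.
  set (R10 := Rpower x (- (1/10))).
  set (R8 := Rpower x (- (1/8))).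
  assert (hR8 : 0 < R8) by (unfold R8, Rpower; apply exp_pos).
  assert (h810 : R8 <= R10) by (apply Rle_Rpower; lra).
  assert (hR4 : R8*R8*(R8*R8) = / sN).
  { replace (R8*R8*(R8*R8)) with (R8 ^ 4) by ring.
    unfold R8. rewrite <- Rpower_pow by (unfold Rpower; apply exp_pos).
    rewrite Rpower_mult. replace (- (1/8) * INR 4) with (- (/2)) by (simpl; field).
    rewrite Rpower_Ropp, Rpower_sqrt by lra. reflexivity. }
  set (tau := sqrt (sqrt t)).
  assert (hst : sqrt t * sqrt t = t) by (apply sqrt_sqrt; lra).
  assert (htt : tau * tau = sqrt t) by (apply sqrt_sqrt; apply sqrt_pos).
  assert (htau0 : 0 <= tau) by apply sqrt_pos.
  assert (htau : tau <= 2 * R8).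
  { apply pow4_le; [lra|lra|]. rewrite htt, hst.
    replace (2*R8*(2*R8)*(2*R8*(2*R8))) with (16 * (R8*R8*(R8*R8))) by ring. rewrite hR4.
    unfold t. unfold Rdiv. replace (B * / (2*sN)) with (B/2 * / sN) by (field; lra).
    apply Rmult_le_compat_r. left; apply Rinv_0_lt_compat; lra. lra. }
  fold tau in HB.
  assert (hR10 : 0 < R10) by lra.
  apply Rle_trans with (40 * tau); auto.
  apply Rle_trans with (80 * R10). lra.
  apply Rle_trans with (120 * R10 * (2/3)). lra.
  apply Rmult_le_compat_l; lra.
Qed.
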